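(* Let $a,b,c$ be positive numbers with $a<b<c$ and $b-a<c_0<a$, where $c_0=c-\lfloor c/b\rfloor b$. Then $$\mathcal D_{a,b,c}=\Big(\mathcal S_{a,b,c}\cap([0,c_0+a-b)+a\mathbb Z)\cap(\mathcal S_{a,b,c}-\lfloor c/b\rfloor b)\Big)\cup\Big(\mathcal S_{a,b,c}\cap\bigcup_{\lambda\in b\mathbb Z\cap[b,(\lfloor c/b\rfloor-1)b]}(\mathcal S_{a,b,c}-\lambda)\Big).$$
   Context: For $a,b,c>0$ and $t\in\mathbb R$, $\mathbf M_{a,b,c}(t)=(\chi_{[0,c)}(t-\mu+\lambda))_{\mu\in a\mathbb Z,\lambda\in b\mathbb Z}$ is the infinite matrix with rows indexed by $a\mathbb Z$ and columns by $b\mathbb Z$, acting by $(\mathbf M_{a,b,c}(t)\mathbf x)(\mu)=\sum_{\lambda\in b\mathbb Z}\chi_{[0,c)}(t-\mu+\lambda)\mathbf x(\lambda)$. $\mathcal B_b$ is the set of vectors $(\mathbf x(\lambda))_{\lambda\in b\mathbb Z}$ with entries in $\{0,1\}$, and $\mathcal B_b^0=\{\mathbf x\in\mathcal B_b:\mathbf x(0)=1\}$. $\mathbf 1,\mathbf 2$ denote the vectors indexed by $a\mathbb Z$ with all entries $1$, resp. $2$. $\mathcal D_{a,b,c}=\{t:\mathbf M_{a,b,c}(t)\mathbf x=\mathbf 2\text{ for some }\mathbf x\in\mathcal B_b^0\}$, $\mathcal S_{a,b,c}=\{t:\mathbf M_{a,b,c}(t)\mathbf x=\mathbf 1\text{ for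 some }\mathbf x\in\mathcal B_b^0\}$. For $A\subset\mathbb R$, $A-r=\{x-r:x\in A\}$ and $A+a\mathbb Z=\{x+ak:x\in A,k\in\mathbb Z\}$. *)

(* Defs.v *)
From Stdlib Require Export Reals List ZArith.
Open Scope R_scope.

Definition in_Ico (c s : R) : Prop := 0 <= s /\ s < c.

(* A vector x in B_b: indexed by b*Z, entry x(b*j) encoded as x j : bool. *)
Definition card_eq (P : Z -> Prop) (n : nat) : Prop :=
  exists l : list Z, NoDup l /\ length l = n /\ (forall j, In j l <-> P j).

(* (M_{a,b,c}(t) x)(a*k) = sum_j chi_[0,c)(t - a k + b j) x(b j)
   = number of j with x j = true and t - a k + b j in [0,c).
   (This sum has finitely many nonzero terms since b > 0.)
   M x = n*1 (constant vector n) iff this count equals n for all k. *)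
Definition Mx_const (a b c t : R) (x : Z -> bool) (n : nat) : Prop :=
  forall k : Z,
    card_eq (fun j => x j = true /\ in_Ico c (t - a * IZR k + b * IZR j)) n.

(* D_{a,b,c}: some x in B_b^0 with M(t) x = 2. *)
Definition Dset (a b c : R) (t : R) : Prop :=
  exists x : Z -> bool, x 0%Z = true /\ Mx_const a b c t x 2.

Definition Sset (a b c : R) (t : R) : Prop :=
  exists x : Z -> bool, x 0%Z = true /\ Mx_const a b c t x 1.

(* Main.v *)
Require Import Defs.
From Stdlib Require Import Reals List ZArith Lra Lia.
Open Scope R_scope.

Lemma card1 (P : Z -> Prop) :
  card_eq P 1 <-> exists j, P j /\ forall j', P j' -> j' = j.
Proof.
  split.
  - intros [l [Hnd [Hl Hin]]].
    destruct l as [|j [|j2 l]]; simpl in Hl; try discriminate.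
    exists j; split.
    + apply Hin; simpl; auto.
    + intros j' Hj'. apply Hin in Hj'. simpl in Hj'. destruct Hj' as [H|[]]; auto.
  - intros [j [Hj Hu]]. exists (j :: nil). split; [|split].
    + constructor; [simpl; auto | constructor].
    + reflexivity.
    + intros j'; simpl; split.
      * intros [H|[]]; subst; auto.
      * intros H; left; symmetry; auto.
Qed.

Lemma card2 (P : Z -> Prop) : card_eq P 2 ->
  exists p q, p <> q /\ P p /\ P q /\ forall r, P r -> r = p \/ r = q.
Proof.
  intros [l [Hnd [Hl Hin]]].
  destruct l as [|p [|q [|j3 l]]]; simpl in Hl; try discriminate.
  exists p, q. inversion Hnd; subst. split; [|split; [|split]].
  - intro E; subst. apply H1; simpl; auto.
  - apply Hin; simpl; auto.
  - apply Hin; simpl; auto.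
  - intros r Hr. apply Hin in Hr. simpl in Hr. destruct Hr as [H|[H|[]]]; auto.
Qed.

Lemma card2' (P : Z -> Prop) p q : p <> q -> P p -> P q ->
  (forall r, P r -> r = p \/ r = q) -> card_eq P 2.
Proof.
  intros Hne Hp Hq Hr. exists (p :: q :: nil). split; [|split].
  - constructor.
    + simpl. intros [H|[]]; auto.
    + constructor; [simpl; auto | constructor].
  - reflexivity.
  - intros j; simpl; split.
    + intros [H|[H|[]]]; subst; auto.
    + intros H; destruct (Hr j H); auto.
Qed.

Fixpoint cnt (f : Z -> bool) (lo : Z) (m : nat) : nat :=
  match m with
  | O => O
  | S m' => (if f lo then 1 else 0) + cnt f (lo + 1) m'
  end%nat.

Lemma cnt_add f m1 : forall lo m2,
  cnt f lo (m1 + m2) = (cnt f lo m1 + cnt f (lo + Z.of_nat m1) m2)%nat.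
Proof.
  induction m1; intros lo m2; simpl.
  - rewrite Z.add_0_r. reflexivity.
  - rewrite IHm1. replace (lo + 1 + Z.of_nat m1)%Z with (lo + Z.pos (Pos.of_succ_nat m1))%Z by lia.
    lia.
Qed.

Lemma cnt_zero f m : forall lo, (forall i, (lo <= i < lo + Z.of_nat m)%Z -> f i = false) ->
  cnt f lo m = O.
Proof.
  induction m; intros lo H; simpl; auto.
  rewrite H by lia. rewrite IHm; auto. intros i Hi; apply H; lia.
Qed.

Definition CC f lo hi := Z.of_nat (cnt f lo (Z.to_nat (hi - lo))).

Lemma CC_add f lo mid hi : (lo <= mid <= hi)%Z -> CC f lo hi = (CC f lo mid + CC f mid hi)%Z.
Proof.
  intros H. unfold CC.
  replace (Z.to_nat (hi - lo)) with (Z.to_nat (mid - lo) + Z.to_nat (hi - mid))%nat.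
  2:{ rewrite <- Z2Nat.inj_add by lia. f_equal. lia. }
  rewrite cnt_add. rewrite Z2Nat.id by lia.
  replace (lo + (mid - lo))%Z with mid by lia. lia.
Qed.

Lemma CC_one f p q : (p < q)%Z -> f p = true -> (forall r, (p < r < q)%Z -> f r = false) ->
  CC f p q = 1%Z.
Proof.
  intros Hpq Hp Hr. unfold CC.
  destruct (Z.to_nat (q - p)) eqn:E; [lia|].
  simpl. rewrite Hp. rewrite cnt_zero; auto.
  intros i Hi. apply Hr. lia.
Qed.

Definition rk f j := if (0 <=? j)%Z then CC f 0 j else (- CC f j 0)%Z.

Lemma rk_step f p q : (p <= q)%Z -> rk f q = (rk f p + CC f p q)%Z.
Proof.
  intros H. unfold rk.
  destruct (0 <=? p)%Z eqn:E1; destruct (0 <=? q)%Z eqn:E2;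
    apply Z.leb_le in E1 || apply Z.leb_gt in E1;
    apply Z.leb_le in E2 || apply Z.leb_gt in E2; try lia.
  - rewrite (CC_add f 0 p q) by lia. lia.
  - rewrite (CC_add f p 0 q) by lia. lia.
  - rewrite (CC_add f p q 0) by lia. lia.
Qed.

Lemma par_step f p q : (p < q)%Z -> f p = true -> (forall r, (p < r < q)%Z -> f r = false) ->
  Z.even (rk f q) = negb (Z.even (rk f p)).
Proof.
  intros H1 H2 H3. rewrite (rk_step f p q) by lia. rewrite CC_one by auto.
  rewrite Z.even_add. simpl. destruct (Z.even (rk f p)); reflexivity.
Qed.

Lemma rk0 f : rk f 0 = 0%Z.
Proof. reflexivity. Qed.

Lemma first_true (f : Z -> bool) (d : nat) : forall lo,
  f (lo + Z.of_nat (S d))%Z = true ->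
  exists q, (lo < q <= lo + Z.of_nat (S d))%Z /\ f q = true /\
    forall r, (lo < r < q)%Z -> f r = false.
Proof.
  induction d; intros lo H.
  - exists (lo + 1)%Z. simpl in H. split; [lia|split; auto]. intros; lia.
  - destruct (f (lo + 1)%Z) eqn:E.
    + exists (lo + 1)%Z. split; [lia|split; auto]. intros; lia.
    + destruct (IHd (lo + 1)%Z) as [q [Hq1 [Hq2 Hq3]]].
      { replace (lo + 1 + Z.of_nat (S d))%Z with (lo + Z.of_nat (S (S d)))%Z by lia. auto. }
      exists q. split; [lia|split; auto]. intros r Hr.
      destruct (Z.eq_dec r (lo+1)); [subst; auto|]. apply Hq3; lia.
Qed.
Section Geo.
Variables a b c : R.
Variable N : Z.
Hypothesis ha : 0 < a.
Hypothesis hab : a < b.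
Hypothesis hN : (1 <= N)%Z.
Hypothesis hc0l : b - a < c - IZR N * b.
Hypothesis hc0r : c - IZR N * b < a.

Let c0 := c - IZR N * b.
Lemma c_eq : c = IZR N * b + c0.
Proof. unfold c0; ring. Qed.
Lemma NR : 1 <= IZR N.
Proof. apply IZR_le; auto. Qed.
Lemma bN_ge : b <= IZR N * b.
Proof. pose proof NR. nra. Qed.

Definition win t k j := in_Ico c (t - a * IZR k + b * IZR j).

Lemma win_iff t k j : win t k j <-> (a * IZR k - t <= b * IZR j < a * IZR k - t + c).
Proof. unfold win, in_Ico. split; intros; lra. Qed.

Definition one t (x : Z -> bool) := forall k, exists j, (x j = true /\ win t k j) /\
  forall j', x j' = true /\ win t k j' -> j' = j.

Lemma one_uniq t x k p q : one t x -> x p = true -> x q = true -> win t k p -> win t k q -> p = q.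
Proof.
  intros Ho Hp Hq Wp Wq. destruct (Ho k) as [j [_ Hu]].
  rewrite (Hu p), (Hu q); auto.
Qed.

Lemma density t al : exists k, al < a * IZR k - t <= al + a.
Proof.
  destruct (archimed ((al + t) / a)) as [H1 H2].
  exists (up ((al + t) / a)).
  set (z := IZR (up ((al + t) / a))) in *.
  assert (E : (al + t) / a * a = al + t) by (field; lra).
  split; nra.
Qed.

Lemma bZ_le z w : (z <= w)%Z -> b * IZR z <= b * IZR w.
Proof. intros H. apply IZR_le in H. nra. Qed.
Lemma bZ_lt_inv z w : b * IZR z < b * IZR w -> (z < w)%Z.
Proof. intros H. destruct (Z_lt_le_dec z w); auto. apply bZ_le in l. lra. Qed.

Ltac zr := repeat rewrite ?plus_IZR, ?minus_IZR, ?opp_IZR in *.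

Lemma gap t x p q : one t x -> x p = true -> x q = true -> (p < q)%Z -> (q <= p + N - 1)%Z -> False.
Proof.
  intros Ho Hp Hq H1 H2.
  destruct (density t (b * IZR p - a)) as [k Hk].
  assert (p = q); [|lia].
  apply (one_uniq t x k); auto; apply win_iff.
  - pose proof bN_ge. unfold c0 in *. lra.
  - assert (A1 : (p + 1 <= q)%Z) by lia. apply bZ_le in A1. apply bZ_le in H2. zr.
    unfold c0 in *. unfold c0 in *. lra.
Qed.

Definition nxt (x : Z -> bool) p q := x p = true /\ x q = true /\ (p < q)%Z /\
  forall r, (p < r < q)%Z -> x r = false.
Definition LL t p := forall k, ~ (b * IZR p - c0 < a * IZR k - t <= b * IZR p).
Definition GG t p := forall k, ~ (b * IZR p < a * IZR k - t <= b * IZR p + b - c0).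

Lemma upper t x p : one t x -> x p = true -> exists r, x r = true /\ (p < r <= p + N + 1)%Z.
Proof.
  intros Ho Hp. destruct (density t (b * IZR p)) as [k Hk].
  destruct (Ho k) as [r [[Hr W] _]]. apply win_iff in W.
  exists r. split; auto. split.
  - apply bZ_lt_inv. lra.
  - assert (r < p + N + 2)%Z; [|lia]. apply bZ_lt_inv. zr. unfold c0 in *.
    unfold c0 in *. lra.
Qed.

Lemma lower t x p : one t x -> x p = true -> exists r, x r = true /\ (p - N - 1 <= r < p)%Z.
Proof.
  intros Ho Hp. destruct (density t (b * IZR p - c - a)) as [k Hk].
  destruct (Ho k) as [r [[Hr W] _]]. apply win_iff in W.
  exists r. split; auto. split.
  - assert (p - N - 2 < r)%Z; [|lia]. apply bZ_lt_inv. zr. unfold c0 in *.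
    unfold c0 in *. lra.
  - apply bZ_lt_inv. lra.
Qed.

Lemma LG_false t p : LL t p -> GG t p -> False.
Proof.
  intros HL HG. destruct (density t (b * IZR p - c0)) as [k Hk].
  destruct (Rle_lt_dec (a * IZR k - t) (b * IZR p)).
  - apply (HL k). lra.
  - apply (HG k). lra.
Qed.

Lemma GL_false t q : GG t q -> LL t (q + 1) -> False.
Proof.
  intros HG HL. destruct (density t (b * IZR q)) as [k Hk].
  destruct (Rle_lt_dec (a * IZR k - t) (b * IZR q + b - c0)).
  - apply (HG k). lra.
  - apply (HL k). zr. unfold c0 in *. lra.
Qed.

Lemma char t x p q : one t x -> nxt x p q ->
  (q = (p + N)%Z /\ LL t p) \/ (q = (p + N + 1)%Z /\ GG t p).
Proof.
  intros Ho [Hp [Hq [Hpq Hb]]].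
  assert (Q1 : (p + N <= q)%Z).
  { destruct (Z_lt_le_dec q (p + N)); auto. exfalso; apply (gap t x p q); auto; lia. }
  assert (Q2 : (q <= p + N + 1)%Z).
  { destruct (upper t x p Ho Hp) as [r [Hr Hr2]].
    destruct (Z_lt_le_dec r q); [|lia]. rewrite Hb in Hr by lia. discriminate. }
  destruct (Z.eq_dec q (p + N)) as [E|E].
  - left. split; auto. intros k Hk.
    assert (p = q); [|lia].
    apply (one_uniq t x k); auto; apply win_iff; subst q; zr; unfold c0 in *; pose proof bN_ge;
      unfold c0 in *; lra.
  - right. split; [lia|]. intros k Hk.
    destruct (Ho k) as [r [[Hr W] _]]. apply win_iff in W.
    assert (p < r)%Z by (apply bZ_lt_inv; lra).
    assert (r < p + N + 1)%Z.
    { apply bZ_lt_inv. zr. unfold c0 in *. lra. }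
    rewrite Hb in Hr by lia. discriminate.
Qed.

Lemma det t x y p q q' : one t x -> one t y -> nxt x p q -> nxt y p q' -> q = q'.
Proof.
  intros Hx Hy H1 H2.
  destruct (char t x p q Hx H1) as [[E1 L1]|[E1 L1]];
  destruct (char t y p q' Hy H2) as [[E2 L2]|[E2 L2]]; try lia;
  exfalso; eapply LG_false; eauto.
Qed.

Lemma inj t x y p q z : one t x -> one t y -> nxt x p z -> nxt y q z -> p = q.
Proof.
  intros Hx Hy H1 H2.
  destruct (char t x p z Hx H1) as [[E1 L1]|[E1 L1]];
  destruct (char t y q z Hy H2) as [[E2 L2]|[E2 L2]]; try lia; exfalso.
  - assert (p = q + 1)%Z by lia. subst p. eapply GL_false; eauto.
  - assert (q = p + 1)%Z by lia. subst q. eapply GL_false; eauto.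
Qed.

Lemma fwd t x p : one t x -> x p = true -> exists q, nxt x p q.
Proof.
  intros Ho Hp. destruct (upper t x p Ho Hp) as [r [Hr Hr2]].
  assert (p + N <= r)%Z.
  { destruct (Z_lt_le_dec r (p + N)); auto. exfalso; apply (gap t x p r); auto; lia. }
  destruct (x (p + N)%Z) eqn:E.
  - exists (p + N)%Z. split; [|split; [|split]]; auto; try lia.
    intros r' Hr'. destruct (x r') eqn:E'; auto. exfalso; apply (gap t x p r'); auto; lia.
  - assert (r = p + N + 1)%Z.
    { destruct (Z.eq_dec r (p+N)); [subst; congruence | lia]. }
    subst r. exists (p + N + 1)%Z. split; [|split; [|split]]; auto; try lia.
    intros r' Hr'. destruct (Z.eq_dec r' (p + N)); [subst; auto|].
    destruct (x r') eqn:E'; auto. exfalso; apply (gap t x p r'); auto; lia.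
Qed.

Lemma bwd t x p : one t x -> x p = true -> exists q, nxt x q p.
Proof.
  intros Ho Hp. destruct (lower t x p Ho Hp) as [r [Hr Hr2]].
  assert (r <= p - N)%Z.
  { destruct (Z_lt_le_dec (p - N) r); [|lia]. exfalso; apply (gap t x r p); auto; lia. }
  destruct (x (p - N)%Z) eqn:E.
  - exists (p - N)%Z. split; [|split; [|split]]; auto; try lia.
    intros r' Hr'. destruct (x r') eqn:E'; auto. exfalso; apply (gap t x r' p); auto; lia.
  - assert (r = p - N - 1)%Z.
    { destruct (Z.eq_dec r (p-N)); [subst; congruence | lia]. }
    subst r. exists (p - N - 1)%Z. split; [|split; [|split]]; auto; try lia.
    intros r' Hr'. destruct (Z.eq_dec r' (p - N)); [subst; auto|].
    destruct (x r') eqn:E'; auto. exfalso; apply (gap t x r' p); auto; lia.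
Qed.

Lemma disjoint t x1 x2 : one t x1 -> one t x2 -> x1 0%Z = true -> (x2 0%Z = true -> False) ->
  forall p, x1 p = true -> x2 p = true -> False.
Proof.
  intros H1 H2 H10 H0.
  assert (A : forall p, (0 <= p)%Z -> x1 p = true -> x2 p = true -> False).
  { intros p Hp. generalize Hp. pattern p. apply Z_lt_induction; auto.
    intros z IH Hz0 Hz1 Hz2.
    destruct (Z.eq_dec z 0) as [E|E]; [subst; auto|].
    destruct (bwd t x1 z H1 Hz1) as [q1 Hq1].
    destruct (bwd t x2 z H2 Hz2) as [q2 Hq2].
    assert (q1 = q2) by (apply (inj t x1 x2 q1 q2 z); auto). subst q2.
    destruct Hq1 as [A1 [_ [A3 A4]]]. destruct Hq2 as [B1 _].
    destruct (Z_lt_le_dec q1 0).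
    - rewrite A4 in H10 by lia. discriminate.
    - apply (IH q1); auto; lia. }
  intros p. destruct (Z_lt_le_dec p 0) as [Hp|Hp]; [|apply A; auto].
  replace p with (- (- p))%Z by lia.
  assert (Hm : (0 <= - p)%Z) by lia. generalize Hm. generalize (- p)%Z. clear p Hp Hm.
  intros m Hm. generalize Hm. pattern m. apply Z_lt_induction; auto.
  intros z IH Hz0 Hz1 Hz2.
  destruct (Z.eq_dec z 0) as [E|E]; [subst; apply (A 0%Z); auto; lia|].
  destruct (fwd t x1 (- z)%Z H1 Hz1) as [q1 Hq1].
  destruct (fwd t x2 (- z)%Z H2 Hz2) as [q2 Hq2].
  assert (q1 = q2) by (apply (det t x1 x2 (- z)%Z q1 q2); auto). subst q2.
  destruct Hq1 as [_ [A2 [A3 _]]]. destruct Hq2 as [_ [B2 _]].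
  destruct (Z_lt_le_dec q1 0).
  - apply (IH (- q1)%Z); try lia; rewrite Z.opp_involutive; auto.
  - apply (A q1); auto.
Qed.

Lemma one_Mx t x : one t x <-> Mx_const a b c t x 1.
Proof.
  unfold one, Mx_const. split; intros H k; apply card1; apply H.
Qed.

Lemma shift t y j0 : one t y -> y j0 = true -> Sset a b c (t + b * IZR j0).
Proof.
  intros Ho Hy. exists (fun j => y (j + j0)%Z). split; [simpl; auto|].
  intro k. apply card1. destruct (Ho k) as [j [[Hj W] Hu]].
  exists (j - j0)%Z. split.
  - rewrite Z.sub_add. split; auto. unfold win, in_Ico in *. zr. lra.
  - intros j' [H1 H2]. assert (j' + j0 = j)%Z; [|lia].
    apply Hu. split; auto. unfold win, in_Ico in *. zr. lra.
Qed.

Lemma unshift t j0 : Sset a b c (t + b * IZR j0) -> exists y, one t y /\ y j0 = true.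
Proof.
  intros [x' [H0 HM]]. exists (fun j => x' (j - j0)%Z). split.
  - intro k. destruct (proj1 (card1 _) (HM k)) as [j [[Hj W] Hu]].
    exists (j + j0)%Z. split.
    + replace (j + j0 - j0)%Z with j by lia. split; auto. unfold win, in_Ico in *. zr. lra.
    + intros j' [H1 H2]. assert (j' - j0 = j)%Z; [|lia].
      apply Hu. split; auto. unfold win, in_Ico in *. zr. lra.
  - rewrite Z.sub_diag. auto.
Qed.

Lemma combine t x1 x2 : one t x1 -> one t x2 -> (forall p, x1 p = true -> x2 p = true -> False) ->
  Mx_const a b c t (fun j => orb (x1 j) (x2 j)) 2.
Proof.
  intros H1 H2 Hd k.
  destruct (H1 k) as [p [[Hp Wp] Up]]. destruct (H2 k) as [r [[Hr Wr] Ur]].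
  apply (card2' _ p r).
  - intro E; subst; eauto.
  - rewrite Hp; split; auto.
  - rewrite Hr, Bool.orb_true_r; split; auto.
  - intros j [Hj Wj]. apply Bool.orb_true_iff in Hj. destruct Hj.
    + left; apply Up; split; auto.
    + right; apply Ur; split; auto.
Qed.

Lemma split2 t x (bt : bool) : Mx_const a b c t x 2 ->
  one t (fun j => andb (x j) (Bool.eqb (Z.even (rk x j)) bt)).
Proof.
  intros HM k. destruct (card2 _ (HM k)) as [p [q [Hne [[Hp Wp] [[Hq Wq] Hall]]]]].
  assert (K : forall p q, (p < q)%Z -> x p = true -> win t k p -> x q = true -> win t k q ->
            (forall r, x r = true /\ win t k r -> r = p \/ r = q) ->
            exists j, (andb (x j) (Bool.eqb (Z.even (rk x j)) bt) = true /\ win t k j) /\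
              forall j', andb (x j') (Bool.eqb (Z.even (rk x j')) bt) = true /\ win t k j' -> j' = j).
  { clear p q Hne Hp Wp Hq Wq Hall.
    intros p q Hpq Hp Wp Hq Wq Hall.
    assert (Hs : Z.even (rk x q) = negb (Z.even (rk x p))).
    { apply par_step; auto. intros r Hr. destruct (x r) eqn:E; auto.
      exfalso. assert (W : win t k r).
      { apply win_iff. apply win_iff in Wp. apply win_iff in Wq.
        assert (A1 : (p <= r)%Z) by lia. assert (A2 : (r <= q)%Z) by lia.
        apply bZ_le in A1. apply bZ_le in A2. lra. }
      destruct (Hall r (conj E W)); lia. }
    destruct (Bool.eqb (Z.even (rk x p)) bt) eqn:Ep.
    - exists p. split; [rewrite Hp, Ep; auto|].
      intros j' [Hj' Wj']. apply andb_prop in Hj'. destruct Hj' as [Hj1 Hj2].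
      destruct (Hall j' (conj Hj1 Wj')) as [E|E]; auto. subst j'.
      rewrite Hs in Hj2. destruct (Z.even (rk x p)), bt; simpl in *; discriminate.
    - exists q. split.
      + rewrite Hq, Hs. split; auto. destruct (Z.even (rk x p)), bt; simpl in *; auto; discriminate.
      + intros j' [Hj' Wj']. apply andb_prop in Hj'. destruct Hj' as [Hj1 Hj2].
        destruct (Hall j' (conj Hj1 Wj')) as [E|E]; auto. subst j'. congruence. }
  destruct (Z_lt_le_dec p q).
  - apply (K p q); auto; lia.
  - apply (K q p); auto; try lia; intros r Hr; destruct (Hall r Hr); auto.
Qed.

Lemma main_sec t : Dset a b c t <->
    ((Sset a b c t
      /\ (exists k : Z, 0 <= t - a * IZR k
                        /\ t - a * IZR k < (c - IZR N * b) + a - b)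
      /\ Sset a b c (t + IZR N * b))
     \/
     (Sset a b c t
      /\ exists j : Z, (1 <= j)%Z /\ (j <= N - 1)%Z
                       /\ Sset a b c (t + b * IZR j))).
Proof.
  split.
  - intros [x [Hx0 HM]].
    set (x1 := fun j => andb (x j) (Bool.eqb (Z.even (rk x j)) true)).
    set (x2 := fun j => andb (x j) (Bool.eqb (Z.even (rk x j)) false)).
    assert (O1 : one t x1) by (apply split2; auto).
    assert (O2 : one t x2) by (apply split2; auto).
    assert (X10 : x1 0%Z = true) by (unfold x1; rewrite Hx0; reflexivity).
    assert (S1 : Sset a b c t) by (exists x1; split; auto; apply one_Mx; auto).
    destruct (fwd t x1 0%Z O1 X10) as [m Hm].
    pose proof (char t x1 0%Z m O1 Hm) as Hc.
    destruct Hm as [_ [Hm1 [Hm2 Hm3]]].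
    assert (Hxm : x m = true) by (unfold x1 in Hm1; apply andb_prop in Hm1; tauto).
    destruct (first_true x (Z.to_nat (m - 1)) 0%Z) as [q [Hq1 [Hq2 Hq3]]].
    { rewrite Nat2Z.inj_succ, Z2Nat.id by lia. replace (0 + Z.succ (m - 1))%Z with m by lia. auto. }
    rewrite Nat2Z.inj_succ, Z2Nat.id in Hq1 by lia.
    assert (Hpar : Z.even (rk x q) = negb (Z.even (rk x 0%Z))).
    { apply par_step; auto; lia. }
    rewrite rk0 in Hpar. simpl in Hpar.
    assert (X2q : x2 q = true) by (unfold x2; rewrite Hq2, Hpar; reflexivity).
    assert (Hqm : q <> m).
    { intro E; subst q. unfold x1 in Hm1. rewrite Hpar, Hq2 in Hm1. discriminate. }
    destruct (Z_lt_le_dec q N).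
    + right. split; auto. exists q. split; [lia|split; [lia|]]. apply (shift t x2); auto.
    + left. assert (q = N) by lia. subst q.
      destruct Hc as [[E L]|[E G]]; [lia|].
      split; [auto|split].
      * destruct (density t (b - c0 - a)) as [k Hk]. exists k.
        assert (~ (b * IZR 0 < a * IZR k - t <= b * IZR 0 + b - c0)) by apply G.
        unfold c0 in *. simpl in *. split; lra.
      * rewrite Rmult_comm. apply (shift t x2); auto.
  - intros [[[x1 [H10 HM1]] [[k0 Hk0] HS]] | [[x1 [H10 HM1]] [j0 [Hj1 [Hj2 HS]]]]].
    + rewrite Rmult_comm in HS. destruct (unshift t N HS) as [x2 [O2 H2]].
      apply one_Mx in HM1.
      exists (fun j => orb (x1 j) (x2 j)). split; [rewrite H10; auto|].
      apply combine; auto. apply (disjoint t x1 x2); auto.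
      intros H20. assert (0 = N)%Z; [|lia].
      apply (one_uniq t x2 k0); auto; apply win_iff; pose proof bN_ge; simpl; zr; lra.
    + destruct (unshift t j0 HS) as [x2 [O2 H2]].
      apply one_Mx in HM1.
      exists (fun j => orb (x1 j) (x2 j)). split; [rewrite H10; auto|].
      apply combine; auto. apply (disjoint t x1 x2); auto.
      intros H20. apply (gap t x2 0%Z j0); auto; lia.
Qed.
End Geo.

Theorem theorem4p2 (a b c : R) (ha : 0 < a) (hb : 0 < b) (hc : 0 < c)
  (hab : a < b) (hbc : b < c)
  (hc0l : b - a < c - IZR (Int_part (c / b)) * b)
  (hc0r : c - IZR (Int_part (c / b)) * b < a) :
  forall t : R,
    Dset a b c t <->
    ((Sset a b c t
      /\ (exists k : Z, 0 <= t - a * IZR k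
                        /\ t - a * IZR k < (c - IZR (Int_part (c / b)) * b) + a - b)
      /\ Sset a b c (t + IZR (Int_part (c / b)) * b))
     \/
     (Sset a b c t
      /\ exists j : Z, (1 <= j)%Z /\ (j <= Int_part (c / b) - 1)%Z
                       /\ Sset a b c (t + b * IZR j))).
Proof.
  intros t.
  assert (hN : (1 <= Int_part (c / b))%Z).
  { destruct (Z_lt_le_dec (Int_part (c / b)) 1) as [H|H]; auto.
    exfalso. assert (H' : (Int_part (c / b) <= 0)%Z) by lia. apply IZR_le in H'.
    assert (IZR (Int_part (c / b)) * b <= 0) by nra. lra. }
  apply (main_sec a b c (Int_part (c / b)) ha hab hN hc0l hc0r t).
Qed.
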